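(* Let $n\geq3$ and let $C_n$ be the cycle graph with vertices $x_1,\ldots,x_n$ and edges $\{x_i,x_{i+1}\}$ ($1\le i\le n-1$) and $\{x_n,x_1\}$, so that $NI(C_n)=(x_ix_{i+1}x_{i+2} : i=1,\ldots,n)\subset R=K[x_1,\ldots,x_n]$ with indices read modulo $n$. Then $NI(C_n)$ is normal, has the strong persistence property, and has the persistence property.
   Context: For a simple graph $G$, $N_G[i]=\{j:\{i,j\}\in E(G)\}\cup\{i\}$ and $NI(G)=(\prod_{j\in N_G[i]}x_j : i\in V(G))$. An ideal $I$ is normal if $\overline{I^k}=I^k$ for all $k\geq1$ (integral closure). It has the strong persistence property if $(I^{k+1}:I)=I^k$ for all $k\ge1$, and the persistence property if $\mathrm{Ass}(R/I^k)\subseteq\mathrm{Ass}(R/I^{k+1})$ for all $k\ge1$. *)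

(* Defs.v *)
From mathcomp Require Import all_boot all_order all_algebra.
From mathcomp Require Import mpoly.
From Stdlib Require List.

Set Implicit Arguments.
Unset Strict Implicit.
Unset Printing Implicit Defensive.

Import GRing.Theory.
Local Open Scope ring_scope.

Section Ideals.
Variable R : comNzRingType.

Definition pset := R -> Prop.

Definition set_eq (A B : pset) : Prop := forall x, A x <-> B x.

Definition ideal_span (S : pset) : pset :=
  fun r => exists s : seq (R * R),
    (forall p, List.In p s -> S p.2) /\ r = \sum_(p <- s) p.1 * p.2.

Definition is_ideal (I : pset) : Prop :=
  [/\ I 0, (forall a b, I a -> I b -> I (a + b)) &
      (forall r a, I a -> I (r * a))].

Definition ideal_mul (I J : pset) : pset :=
  ideal_span (fun r => exists a b, [/\ I a, J b & r = a * b]).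

Definition ideal_exp (I : pset) (k : nat) : pset :=
  iter k (ideal_mul I) (fun _ => True).

Definition int_closure (I : pset) : pset :=
  fun r => exists (m : nat) (a : nat -> R),
    [/\ (0 < m)%N,
        (forall i, (1 <= i <= m)%N -> ideal_exp I i (a i)) &
        r ^+ m + \sum_(1 <= i < m.+1) a i * r ^+ (m - i) = 0].

Definition colon (J I : pset) : pset := fun r => forall a, I a -> J (r * a).

Definition is_prime_ideal (P : pset) : Prop :=
  [/\ is_ideal P, ~ P 1 & forall a b, P (a * b) -> P a \/ P b].

(* P \in Ass(R/I) : P is a prime ideal of the form (I : r). *)
Definition ass (I P : pset) : Prop :=
  is_prime_ideal P /\ exists r, forall x, P x <-> I (x * r).

Definition normal_ideal (I : pset) : Prop :=
  forall k, (1 <= k)%N -> set_eq (int_closure (ideal_exp I k)) (ideal_exp I k).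

Definition strong_persistence (I : pset) : Prop :=
  forall k, (1 <= k)%N -> set_eq (colon (ideal_exp I k.+1) I) (ideal_exp I k).

Definition persistence (I : pset) : Prop :=
  forall k, (1 <= k)%N -> forall P, ass (ideal_exp I k) P -> ass (ideal_exp I k.+1) P.

End Ideals.

(* Closed neighborhood ideal of a simple graph on vertices 'I_n
   (adjacency relation g), in K[x_0, ..., x_{n-1}]. *)
Definition NI (K : fieldType) (n : nat) (g : rel 'I_n) : pset {mpoly K[n]} :=
  ideal_span (fun r => exists i : 'I_n,
    r = \prod_(j : 'I_n | (j == i) || g i j) 'X_j).

Definition cycle_rel (n : nat) : rel 'I_n :=
  fun i j => (j == ordS i) || (i == ordS j).

(* Main.v *)
Require Import Defs.
From mathcomp Require Import all_boot all_order all_algebra.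
From mathcomp Require Import mpoly.
From mathcomp Require Import zify ring lra.
From Stdlib Require Import Classical.
Import GRing.Theory Num.Theory Order.TTheory.
Local Open Scope ring_scope.

Section FM.
Variable Good : nat -> nat -> int -> Prop.
Hypothesis Hcomp : forall a b d c c', Good a b c -> Good b d c' -> Good a d (c + c').
Hypothesis Hloop : forall a c, Good a a c -> 0 <= c.

Definition cst := (nat * nat * int)%type.
Definition sat (x : nat -> int) (t : cst) := x t.1.2 <= x t.1.1 + t.2.

Fixpoint fmax (x : nat -> int) (s : seq cst) (D : int) :=
  if s is t :: s' then Num.max (fmax x s' D) (x t.1.2 - t.2) else D.
Fixpoint fmin (x : nat -> int) (s : seq cst) :=
  if s is t :: s' then Num.min (fmin x s') (x t.1.1 + t.2) else 0.

Lemma fmax_ge x s D : D <= fmax x s D /\ forall t, t \in s -> x t.1.2 - t.2 <= fmax x s D.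
Proof.
elim: s => [|t s [IH1 IH2]] /=; first by split.
split; first by rewrite le_max IH1.
move=> t'; rewrite inE => /orP [/eqP ->|h]; first by rewrite le_max lexx orbT.
by rewrite le_max IH2.
Qed.

Lemma fmax_le x s D B : D <= B -> (forall t, t \in s -> x t.1.2 - t.2 <= B) -> fmax x s D <= B.
Proof.
move=> hD; elim: s => [|t s IH] h //=.
rewrite ge_max IH ?h ?mem_head // => t' ht'; apply: h; by rewrite inE ht' orbT.
Qed.

Lemma fmin_le x s : fmin x s <= 0 /\ forall t, t \in s -> fmin x s <= x t.1.1 + t.2.
Proof.
elim: s => [|t s [IH1 IH2]] /=; first by split.
split; first by rewrite ge_min IH1.
move=> t'; rewrite inE => /orP [/eqP ->|h]; first by rewrite ge_min lexx orbT.
by rewrite ge_min IH2.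
Qed.

Lemma FM_main m : forall s : seq cst,
  (forall t, t \in s -> [/\ Good t.1.1 t.1.2 t.2, (t.1.1 < m)%N & (t.1.2 < m)%N]) ->
  exists x, forall t, t \in s -> sat x t.
Proof.
elim: m => [|m IH] s Hs.
  by exists (fun _ => 0) => t /Hs [_]; rewrite ltn0.
pose v := m.
pose s0 := [seq t <- s | (t.1.1 != v) && (t.1.2 != v)].
pose up := [seq t <- s | (t.1.1 != v) && (t.1.2 == v)].
pose low := [seq t <- s | (t.1.1 == v) && (t.1.2 != v)].
pose s' := s0 ++ [seq ((t.1.1, t'.1.2), t.2 + t'.2) | t <- up, t' <- low].
have Hs' : forall t, t \in s' -> [/\ Good t.1.1 t.1.2 t.2, (t.1.1 < m)%N & (t.1.2 < m)%N].
  move=> t; rewrite mem_cat => /orP [].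
    rewrite mem_filter => /andP [/andP [h1 h2] /Hs [g l1 l2]]; split => //.
      by rewrite ltn_neqAle h1 -ltnS.
    by rewrite ltn_neqAle h2 -ltnS.
  case/allpairsP => [[t1 t2]] /= [].
  rewrite !mem_filter => /andP [/andP [a1 /eqP b1] /Hs [g1 l1 _]].
  move=> /andP [/andP [/eqP a2 b2] /Hs [g2 _ l2]] -> /=.
  split.
  - by apply: Hcomp _ _ _ _ _ g1 _; rewrite b1 -a2.
  - by rewrite ltn_neqAle a1 -ltnS.
  - by rewrite ltn_neqAle b2 -ltnS.
have [x Hx] := IH s' Hs'.
pose M := fmax x low (fmin x up).
exists (fun i => if i == v then M else x i) => t ht.
rewrite /sat /=.
have [g l1 l2] := Hs t ht.
case E1: (t.1.1 == v); case E2: (t.1.2 == v).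
- move/eqP: E1 => E1; move/eqP: E2 => E2.
  rewrite E1 E2 in g; have := Hloop _ _ g.
  lra.
- idtac.
  have [_ H] := fmax_ge x low (fmin x up).
  have : t \in low by rewrite mem_filter E1 E2 ht.
  move/H; rewrite -/M; lra.
- idtac.
  have tup : t \in up by rewrite mem_filter E1 E2 ht.
  suff : M <= x t.1.1 + t.2 by [].
  apply: fmax_le; first by have [_ H] := fmin_le x up; exact: H.
  move=> t' tl.
  have : ((t.1.1, t'.1.2), t.2 + t'.2) \in s'.
    by rewrite mem_cat; apply/orP; right; apply/allpairsP; exists (t, t').
  move/Hx; rewrite /sat /=; lra.
- apply: Hx.
  by rewrite mem_cat mem_filter E1 E2 ht.
Qed.
End FM.

Set Implicit Arguments.
Unset Strict Implicit.

Section Cyc.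
Variable n : nat.
Hypothesis hn : (3 <= n)%N.

Definition Gb (i v : 'I_n) : bool := (v == i) || cycle_rel i v.

Lemma ordS_val (v : 'I_n) : (ordS v : nat) = if (v.+1 < n)%N then v.+1 else 0%N.
Proof.
rewrite /ordS /=; case: ifP => h; first by rewrite modn_small.
have -> : v.+1 = n by have := ltn_ord v; lia.
by rewrite modnn.
Qed.

Lemma ord_pred_val (v : 'I_n) : (ord_pred v : nat) = if v == 0%N :> nat then n.-1 else v.-1.
Proof.
rewrite /ord_pred /=; case: ifP => /eqP h.
  by rewrite h add0n modn_small //; lia.
have -> : ((v + n).-1 = 1 * n + v.-1)%N by lia.
by rewrite modnMDl modn_small //; have := ltn_ord v; lia.
Qed.

Lemma Gb_char (i v : 'I_n) : Gb i v = [|| i == v, i == ord_pred v | i == ordS v].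
Proof.
rewrite /Gb /cycle_rel eq_sym; congr (_ || _); congr (_ || _).
apply/eqP/eqP => ->; [by rewrite ordSK | by rewrite ord_predK].
Qed.

Lemma Gb_val (i v : 'I_n) : Gb i v = [|| (i:nat) == v,
   (i:nat) == (if v == 0%N :> nat then n.-1 else v.-1) |
   (i:nat) == (if (v.+1 < n)%N then v.+1 else 0%N)].
Proof. by rewrite Gb_char -ord_pred_val -ordS_val. Qed.

Lemma sum_ind (f : 'I_n -> nat) (a : 'I_n) : (\sum_i f i * (i == a) = f a)%N.
Proof.
rewrite (bigD1 a) //= eqxx muln1 big1 ?addn0 // => i /negbTE ->; by rewrite muln0.
Qed.

Lemma sum3 (f : 'I_n -> nat) (v : 'I_n) :
  (\sum_i f i * Gb i v = f v + f (ord_pred v) + f (ordS v))%N.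
Proof.
have d1 : v != ord_pred v.
  apply/eqP => /(congr1 (@nat_of_ord n)); rewrite ord_pred_val /=; have := ltn_ord v; case: ifP => /eqP; lia.
have d2 : v != ordS v.
  apply/eqP => /(congr1 (@nat_of_ord n)); rewrite ordS_val /=; have := ltn_ord v; case: ifP; lia.
have d3 : ord_pred v != ordS v.
  apply/eqP => /(congr1 (@nat_of_ord n)); rewrite ordS_val ord_pred_val /=; have := ltn_ord v;
  case: ifP => /eqP; case: ifP; lia.
have e : forall i, (Gb i v : nat) = ((i == v) + (i == ord_pred v) + (i == ordS v))%N.
  move=> i; rewrite Gb_char.
  case: (eqVneq i v) => [->|h1]; first by rewrite (negbTE d1) (negbTE d2).
  case: (eqVneq i (ord_pred v)) => [->|h2]; first by rewrite (negbTE d3).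
  by case: (eqVneq i (ordS v)).
under eq_bigr => i _ do rewrite e !mulnDr.
by rewrite !big_split /= !sum_ind.
Qed.

Definition Pk (k : nat) (u : 'I_n -> nat) :=
  exists c : 'I_n -> nat, (\sum_i c i = k)%N /\ forall v, (\sum_i c i * Gb i v <= u v)%N.


Definition bz (b : bool) : int := (b : nat)%:Z.

Section F.
Variables (u : 'I_n -> nat) (k : nat).
Hypothesis H : forall (w : 'I_n -> nat) (r : nat),
  (forall i, r <= \sum_v w v * Gb i v)%N -> (r * k <= \sum_v w v * u v)%N.

Definition Good (a b : nat) (c : int) := exists (w : 'I_n -> nat) (r : int),
  c = (\sum_v w v * u v)%N%:Z - r * k%:Z /\
  forall i : 'I_n, bz (i < b)%N - bz (i < a)%N + r <= (\sum_v w v * Gb i v)%N%:Z.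

Lemma sumD (w w' f : 'I_n -> nat) :
  (\sum_v (w v + w' v) * f v = \sum_v w v * f v + \sum_v w' v * f v)%N.
Proof. by rewrite -big_split; apply: eq_bigr => v _; rewrite mulnDl. Qed.

Lemma Good_comp a b d c c' : Good a b c -> Good b d c' -> Good a d (c + c').
Proof.
move=> [w [r [-> h]]] [w' [r' [-> h']]].
exists (fun v => w v + w' v), (r + r'); split.
  rewrite sumD PoszD; ring.
move=> i; have := h i; have := h' i; rewrite sumD PoszD; lra.
Qed.

Lemma Good_loop a c : Good a a c -> 0 <= c.
Proof.
move=> [w [r [-> h]]].
case: r h => r h.
  have : (r * k <= \sum_v w v * u v)%N.
    apply: H => i; have := h i; rewrite subrr add0r; lia.
  lia.
rewrite NegzE; lia.
Qed.


Definition av (v : 'I_n) : nat := if v == 0%N :> nat then n.-1 else v.-1.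
Definition bv (v : 'I_n) : nat := if (v.+2 <= n)%N then v.+2 else (v.+2 - n)%N.
Definition rv (v : 'I_n) : int := if (v == 0%N :> nat) || (n < v.+2)%N then 1 else 0.
Definition vc (v : 'I_n) : cst := ((av v, bv v), (u v)%:Z - rv v * k%:Z).
Definition cl : seq cst := [seq ((j.+1, j), 0) | j <- iota 0 n] ++
  [:: ((0%N, n), k%:Z); ((n, 0%N), - k%:Z)] ++ [seq vc v | v <- enum 'I_n].

Lemma sum0w (f : 'I_n -> nat) : (\sum_v 0 * f v = 0)%N.
Proof. by rewrite big1. Qed.

Lemma cl_good t : t \in cl -> [/\ Good t.1.1 t.1.2 t.2, (t.1.1 < n.+1)%N & (t.1.2 < n.+1)%N].
Proof.
rewrite !mem_cat => /or3P [].
- case/mapP => j; rewrite mem_iota add0n => /andP [_ hj] -> /=; split; try lia.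
  exists (fun _ => 0%N), 0; split; first by rewrite sum0w.
  move=> i; rewrite sum0w /bz; lia.
- rewrite !inE => /orP [] /eqP -> /=; split; try lia.
  + exists (fun _ => 0%N), (-1); split; first by rewrite sum0w; lia.
    move=> i; rewrite sum0w /bz; have := ltn_ord i; lia.
  + exists (fun _ => 0%N), 1; split; first by rewrite sum0w; lia.
    move=> i; rewrite sum0w /bz; have := ltn_ord i; lia.
- case/mapP => v _ -> /=; rewrite /av /bv.
  have hv := ltn_ord v.
  split; [|by case: ifP; lia|by case: ifP; lia].
  exists (fun v' => (v' == v : nat)), (rv v); split.
    by under eq_bigr => v' _ do rewrite mulnC; rewrite sum_ind.
  move=> i; under eq_bigr => v' _ do rewrite mulnC; rewrite sum_ind.
  have hi := ltn_ord i.
  rewrite Gb_val /bz /rv.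
  move: (i : nat) (v : nat) hi hv => ii vv hi hv.
  repeat (case: ifP => ? /=). all: lia.
Qed.

Theorem F_main : Pk k u.
Proof.
have [x hx] := @FM_main Good Good_comp Good_loop _ _ cl_good.
have back : forall j, (j < n)%N -> x j <= x j.+1.
  move=> j hj; have := hx ((j.+1, j), 0); rewrite /sat /= addr0; apply.
  by rewrite mem_cat; apply/orP; left; apply/mapP; exists j; rewrite // mem_iota.
have top : x n = x 0%N + k%:Z.
  have h1 := hx ((0%N, n), k%:Z); have h2 := hx ((n, 0%N), - k%:Z).
  rewrite /sat /= in h1 h2.
  have m1 : ((0%N, n), k%:Z) \in cl by rewrite !mem_cat !inE eqxx !orbT.
  have m2 : ((n, 0%N), - k%:Z) \in cl by rewrite !mem_cat !inE eqxx !orbT.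
  have := h1 m1; have := h2 m2; lra.
have vcs : forall v : 'I_n, x (bv v) <= x (av v) + ((u v)%:Z - rv v * k%:Z).
  move=> v; apply: (hx (vc v)).
  by rewrite !mem_cat; apply/or3P; constructor 3; apply/mapP; exists v; rewrite ?mem_enum.
pose c (i : 'I_n) := `|x i.+1 - x i|%N.
have ce : forall i : 'I_n, (c i)%:Z = x i.+1 - x i.
  by move=> i; rewrite /c gez0_abs // subr_ge0; apply: back.
exists c; split.
  apply/eqP; rewrite -eqz_nat; apply/eqP.
  rewrite -[Posz (\sum_i c i)]intz sumMz.
  under eq_bigr => i _ do rewrite intz ce.
  rewrite -(big_mkord xpredT (fun i => x i.+1 - x i)) telescope_sumr // top; ring.
move=> v.
rewrite sum3 -lez_nat !PoszD !ce.
have := vcs v; have hv := ltn_ord v.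
rewrite /av /bv /rv ordS_val ord_pred_val.
case: (eqVneq (v:nat) 0%N) => [v0|vn0].
  rewrite v0 /= (_ : (1 < n)%N = true); last by lia.
  rewrite prednK; last by lia.
  move=> h; have := top; lra.
rewrite /= prednK; last by lia.
case: ifP => hv1.
  rewrite (_ : (n < v.+2)%N = false); last by lia.
  move=> h; lra.
have e : v.+1 = n by lia.
rewrite (_ : (v.+2 - n)%N = 1%N); last by lia.
rewrite (_ : (n < v.+2)%N = true); last by lia.
rewrite e => h; have := top; lra.
Qed.


End F.
End Cyc.

Set Implicit Arguments.
Unset Strict Implicit.

Section Mon.
Variables (K : fieldType) (n : nat).
Hypothesis hn : (3 <= n)%N.
Local Notation R := {mpoly K[n]}.

Definition MonId (P : 'X_{1..n} -> Prop) : pset R :=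
  fun f => forall m, m \in msupp f -> P m.
Definition upc (P : 'X_{1..n} -> Prop) := forall m m', P m -> P (m' + m)%MM.

Lemma MonId0 P : MonId P 0.
Proof. by move=> m; rewrite mcoeff_msupp raddf0 eqxx. Qed.

Lemma MonIdD P a b : MonId P a -> MonId P b -> MonId P (a + b).
Proof. by move=> ha hb m /msuppD_le; rewrite mem_cat => /orP [/ha|/hb]. Qed.

Lemma MonIdM P r a : upc P -> MonId P a -> MonId P (r * a).
Proof.
move=> up ha m /msuppM_le /allpairsP [[m1 m2] /= [_ h2 ->]]; exact/up/ha.
Qed.

Lemma MonId_sum P (s : seq (R * R)) : upc P ->
  (forall p, List.In p s -> MonId P p.2) -> MonId P (\sum_(p <- s) p.1 * p.2).
Proof.
move=> up; elim: s => [|p s IH] h; first by rewrite big_nil; exact: MonId0.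
rewrite big_cons; apply: MonIdD; first by apply: MonIdM => //; apply: h; left.
by apply: IH => q hq; apply: h; right.
Qed.

Lemma MonId_span P S : upc P -> (forall x, S x -> MonId P x) ->
  forall x, ideal_span S x -> MonId P x.
Proof. by move=> up hS x [s [hs ->]]; apply: MonId_sum => // p /hs /hS. Qed.

Definition Pm k (m : 'X_{1..n}) := @Pk n k (fun v => m v).

Lemma Pm0 m : Pm 0 m.
Proof. by exists (fun _ => 0%N); split => [|v]; rewrite big1. Qed.

Lemma Pm_add a b m1 m2 : Pm a m1 -> Pm b m2 -> Pm (a + b) (m1 + m2)%MM.
Proof.
move=> [c1 [s1 h1]] [c2 [s2 h2]]; exists (fun i => c1 i + c2 i)%N; split.
  by rewrite big_split /= s1 s2.
move=> v; rewrite mnmDE sumD; have := h1 v; have := h2 v; lia.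
Qed.

Lemma Pm_up k : upc (Pm k).
Proof.
move=> m m' [c [s h]]; exists c; split => // v; rewrite mnmDE; have := h v; lia.
Qed.

Lemma MonId_mul a b x y : MonId (Pm a) x -> MonId (Pm b) y -> MonId (Pm (a + b)) (x * y).
Proof.
move=> hx hy m /msuppM_le /allpairsP [[m1 m2] /= [h1 h2 ->]].
exact: Pm_add (hx _ h1) (hy _ h2).
Qed.

Lemma MonId_idmul a b X Y : (forall x, X x -> MonId (Pm a) x) ->
  (forall y, Y y -> MonId (Pm b) y) -> forall z, ideal_mul X Y z -> MonId (Pm (a + b)) z.
Proof.
move=> hX hY; apply: MonId_span; first exact: Pm_up.
by move=> z [x [y [/hX hx /hY hy ->]]]; apply: MonId_mul.
Qed.


Local Notation I := (NI (K:=K) (@cycle_rel n)).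

Definition gm (i : 'I_n) : 'X_{1..n} := [multinom (Gb i v : nat) | v < n].

Lemma gen_eq (i : 'I_n) :
  \prod_(j : 'I_n | (j == i) || cycle_rel i j) 'X_j = 'X_[gm i] :> R.
Proof.
rewrite (mprodXE K (fun j => U_(j)%MM)); congr mpolyX; apply/mnmP => v.
rewrite mnm_sumE mnmE big_mkcond /= (bigD1 v) //= mnm1E eqxx big1 ?addn0.
  by rewrite /Gb; case: ifP.
by move=> j /negbTE hj; rewrite mnm1E hj; case: ifP.
Qed.

Lemma Pm1_gm i : Pm 1 (gm i).
Proof.
exists (fun j => (j == i : nat)); split.
  by rewrite (bigD1 i) //= eqxx big1 // => j /negbTE ->.
move=> v; under eq_bigr => j _ do rewrite mulnC; rewrite sum_ind mnmE; lia.
Qed.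

Lemma NI_sub x : I x -> MonId (Pm 1) x.
Proof.
apply: MonId_span; first exact: Pm_up.
move=> y [i ->]; rewrite gen_eq => m; rewrite msuppX inE => /eqP ->; exact: Pm1_gm.
Qed.

Lemma pow_sub k : forall x, ideal_exp I k x -> MonId (Pm k) x.
Proof.
elim: k => [|k IH] x /=; first by move=> _ m _; exact: Pm0.
by rewrite -add1n; apply: MonId_idmul; [exact: NI_sub | exact: IH].
Qed.

Lemma powpow_sub k i : forall x, ideal_exp (ideal_exp I k) i x -> MonId (Pm (k * i)) x.
Proof.
elim: i => [|i IH] x /=; first by move=> _ m _; rewrite muln0; exact: Pm0.
by rewrite mulnS; apply: MonId_idmul; [exact: pow_sub | exact: IH].
Qed.

Lemma In_cat (T : Type) (p : T) s t : List.In p (s ++ t) -> List.In p s \/ List.In p t.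
Proof.
elim: s => [|q s IH] /=; first by right.
by case => [->|/IH [h|h]]; [left; left|left; right|right].
Qed.

Lemma In_map (T U : Type) (f : T -> U) (p : U) s :
  List.In p [seq f q | q <- s] -> exists q, p = f q /\ List.In q s.
Proof.
elim: s => [|q s IH] //= [<-|/IH [q' [-> h]]]; first by exists q; split => //; left.
by exists q'; split => //; right.
Qed.

Lemma span_ideal (S : pset R) : is_ideal (ideal_span S).
Proof.
split.
- by exists [::]; rewrite big_nil.
- move=> a b [s [hs ->]] [t [ht ->]]; exists (s ++ t); split; last by rewrite big_cat.
  move=> p hp; case: (In_cat hp) => h; [exact: hs | exact: ht].
- move=> r a [s [hs ->]]; exists [seq (r * p.1, p.2) | p <- s]; split.
    move=> p hp; case: (In_map hp) => q [-> hq]; exact: (hs q hq).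
  by rewrite big_map mulr_sumr; apply: eq_bigr => p _; rewrite mulrA.
Qed.

Lemma span_in (S : pset R) x : S x -> ideal_span S x.
Proof. by move=> h; exists [:: (1, x)]; split => [p [<-|[]]|]; rewrite ?big_seq1 ?mul1r. Qed.

Lemma pow_ideal k : is_ideal (ideal_exp I k).
Proof. case: k => [|k]; last exact: span_ideal. by split. Qed.

Lemma ideal_sum (J : pset R) (s : seq 'X_{1..n}) F : is_ideal J ->
  (forall m, m \in s -> J (F m)) -> J (\sum_(m <- s) F m).
Proof.
move=> [h0 hD hM]; elim: s => [|m s IH] h; first by rewrite big_nil.
rewrite big_cons; apply: hD; first by apply: h; rewrite mem_head.
by apply: IH => m' hm'; apply: h; rewrite inE hm' orbT.
Qed.

Lemma X_in_pow k : forall m, Pm k m -> ideal_exp I k 'X_[m].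
Proof.
elim: k => [|k IH] m //= [c [s h]].
have [i ci] : exists i, (0 < c i)%N.
  case: (pickP (fun i => 0 < c i)%N) => [i hi|h0]; first by exists i.
  move: s; rewrite big1 // => j _; apply/eqP; by move: (h0 j); rewrite /= lt0n => /negbFE.
pose c' j := (c j - (j == i))%N.
have ce : forall j, c j = (c' j + (j == i))%N.
  by move=> j; rewrite /c'; case: (eqVneq j i) => [->|]; lia.
have hle : forall v, (\sum_j c' j * Gb j v + Gb i v <= m v)%N.
  move=> v; have := h v.
  under eq_bigr => j _ do rewrite ce mulnDl.
  rewrite big_split /=; under [X in (_ + X)%N]eq_bigr => j _ do rewrite mulnC.
  by rewrite sum_ind.
have gle : (gm i <= m)%MM by apply/mnm_lepP => v; rewrite mnmE; have := hle v; lia.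
rewrite -(submK gle) addmC mpolyXD.
apply: span_in; exists 'X_[gm i], 'X_[m - gm i]; split => //.
  by apply: span_in; exists i; rewrite gen_eq.
apply: IH; exists c'; split.
  have s1 : (\sum_j ((j == i) : nat) = 1)%N.
    by rewrite (bigD1 i) //= eqxx big1 // => j /negbTE ->.
  have : (\sum_j c j = \sum_j c' j + 1)%N.
    by under eq_bigr => j _ do rewrite ce; rewrite big_split /= s1.
  lia.
move=> v; rewrite mnmBE mnmE; have := hle v; lia.
Qed.

Lemma MonId_pow k x : MonId (Pm k) x -> ideal_exp I k x.
Proof.
move=> hx; rewrite [x]mpolyE; apply: ideal_sum; first exact: pow_ideal.
move=> m hm; rewrite -mul_mpolyC; have [_ _ hM] := pow_ideal k; apply: hM.
exact/X_in_pow/hx.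
Qed.

End Mon.

Set Implicit Arguments.
Unset Strict Implicit.

Section LB.
Variable S : idomainType.
Definition LB (c : nat) (q : {poly S}) := forall d, (d < c)%N -> q`_d = 0.

Lemma LB_weak c c' q : (c' <= c)%N -> LB c q -> LB c' q.
Proof. by move=> h hq d hd; apply: hq; lia. Qed.

Lemma LB_mul a b p q : LB a p -> LB b q -> LB (a + b) (p * q).
Proof.
move=> hp hq d hd; rewrite coefM big1 // => j _.
case: (ltnP j a) => hj; first by rewrite hp // mul0r.
by rewrite hq ?mulr0 //; have := ltn_ord j; lia.
Qed.

Lemma coef_mul_low a b p q : LB a p -> LB b q -> (p * q)`_(a + b) = p`_a * q`_b.
Proof.
move=> hp hq; have ha : (a < (a + b).+1)%N by lia.
rewrite coefM (bigD1 (Ordinal ha)) //=.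
rewrite addKn big1 ?addr0 // => j /eqP hj.
case: (ltnP j a) => h; first by rewrite hp // mul0r.
rewrite hq ?mulr0 //; have := ltn_ord j.
have : (j : nat) != a by apply/eqP => e; apply: hj; apply: val_inj.
lia.
Qed.

Lemma LB_pow a p m : LB a p -> LB (a * m) (p ^+ m) /\ (p ^+ m)`_(a * m) = p`_a ^+ m.
Proof.
move=> hp; elim: m => [|m [IH1 IH2]].
  by rewrite muln0 expr0 coefC /=; split => // d.
rewrite exprS mulnS; split; first exact: LB_mul.
by rewrite coef_mul_low // IH2 exprS.
Qed.

Lemma LB_add c p q : LB c p -> LB c q -> LB c (p + q).
Proof. by move=> hp hq d hd; rewrite coefD hp ?hq ?addr0. Qed.
End LB.

Lemma weight_lemma n k (u : 'I_n -> nat) (w : 'I_n -> nat) (r : nat) :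
  Pk k u -> (forall i, r <= \sum_v w v * Gb i v)%N -> (r * k <= \sum_v w v * u v)%N.
Proof.
move=> [c [<- h]] hr.
apply: (@leq_trans (\sum_v w v * \sum_i c i * Gb i v)).
  rewrite big_distrr /=.
  under [X in (_ <= X)%N]eq_bigr => v _ do rewrite big_distrr /=.
  rewrite exchange_big /= leq_sum // => i _.
  have e : (\sum_v w v * (c i * Gb i v) = c i * \sum_v w v * Gb i v)%N.
    by rewrite big_distrr; apply: eq_bigr => v _ /=; lia.
  by rewrite e mulnC leq_mul2l hr orbT.
by apply: leq_sum => v _; rewrite leq_mul2l h orbT.
Qed.

Section Wt.
Variables (K : fieldType) (n : nat).
Local Notation R := {mpoly K[n]}.
Local Notation PR := {poly R}.
Variable w : 'I_n -> nat.

Definition wt (m : 'X_{1..n}) : nat := (\sum_v w v * m v)%N.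
Definition fC : {rmorphism K -> PR} := (polyC \o @mpolyC n K).
Definition hX (i : 'I_n) : PR := ('X_i)%:P * 'X^(w i).
Definition phi (p : R) : PR := mmap fC hX p.

Lemma phiM a b : phi (a * b) = phi a * phi b.
Proof. exact: (mmap_is_multiplicative hX fC).1. Qed.

Lemma phiD a b : phi (a + b) = phi a + phi b.
Proof. exact: raddfD. Qed.
Lemma phi0 : phi 0 = 0.
Proof. exact: raddf0. Qed.
Lemma phi_sum (s : seq nat) (F : nat -> R) : phi (\sum_(i <- s) F i) = \sum_(i <- s) phi (F i).
Proof. exact: raddf_sum. Qed.

Lemma phi1 : phi 1 = 1.
Proof. exact: (mmap_is_multiplicative hX fC).2. Qed.

Lemma phiX a m : phi (a ^+ m) = phi a ^+ m.
Proof. by elim: m => [|m IH]; rewrite ?expr0 ?phi1 // !exprS phiM IH. Qed.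

Lemma mmap1_eq m : mmap1 hX m = ('X_[m])%:P * 'X^(wt m).
Proof.
rewrite /mmap1 /hX.
under eq_bigr => i _ do rewrite exprMn -rmorphXn -exprM.
rewrite big_split /= -rmorph_prod prodrXr; congr (_ * _).
by rewrite [in RHS]mpolyXE_id.
Qed.

Lemma phi_eq p : phi p = \sum_(m <- msupp p) (p@_m *: 'X_[m])%:P * 'X^(wt m).
Proof.
rewrite /phi /mmap; apply: eq_bigr => m _.
by rewrite mmap1_eq /fC /= mulrA -rmorphM mul_mpolyC.
Qed.

Lemma phi_coef p d : (phi p)`_d = \sum_(m <- msupp p) (p@_m *: 'X_[m]) * (d == wt m)%:R.
Proof. by rewrite phi_eq coef_sum; apply: eq_bigr => m _; rewrite coefCM coefXn. Qed.

Lemma phi_LB p c : (forall m, m \in msupp p -> (c <= wt m)%N) -> LB c (phi p).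
Proof.
move=> h d hd; rewrite phi_coef big1_seq // => m /andP [_ hm].
have := h m hm; case: (eqVneq d (wt m)) => [e|_] hc; first by lia.
by rewrite mulr0.
Qed.

Lemma phi_coef_nz p m0 : m0 \in msupp p -> (phi p)`_(wt m0) != 0.
Proof.
move=> hm; apply/eqP => /(congr1 (mcoeff m0)).
rewrite phi_coef raddf_sum (bigD1_seq m0) ?msupp_uniq //= big1.
  rewrite eqxx mulr1 mcoeffZ mcoeffX eqxx mulr1 addr0 raddf0 => /eqP.
  by rewrite mcoeff_msupp in hm; rewrite (negbTE hm).
move=> m hne; rewrite mulr_natr mcoeffMn mcoeffZ mcoeffX.
by rewrite (negbTE hne) mulr0 mul0rn.
Qed.

End Wt.

Set Implicit Arguments.
Unset Strict Implicit.

Section Main.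
Variables (K : fieldType) (n : nat).
Hypothesis hn : (3 <= n)%N.
Local Notation R := {mpoly K[n]}.
Local Notation I := (NI (K:=K) (@cycle_rel n)).

Lemma MonId_LB (w : 'I_n -> nat) (r c : nat) (x : R) :
  (forall i, r <= \sum_v w v * Gb i v)%N -> MonId (Pm c) x -> LB (r * c) (phi w x).
Proof.
move=> hr hx; apply: phi_LB => m hm; exact: weight_lemma (hx m hm) hr.
Qed.

Lemma closure_sub k f : int_closure (ideal_exp I k) f -> MonId (Pm k) f.
Proof.
move=> [m [a [hm ha heq]]] u hu.
apply: (F_main hn) => w r hr.
rewrite leqNgt; apply/negP => hlt.
have ex : exists d, has (fun m0 => wt w m0 == d) (msupp f).
  by exists (wt w u); apply/hasP; exists u.
case: (ex_minnP ex) => d /hasP [m0 hm0 /eqP e0] dmin.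
have hLB : LB d (phi w f).
  apply: phi_LB => m1 hm1; apply: dmin; apply/hasP; by exists m1.
have nz : (phi w f)`_d != 0 by rewrite -e0; exact: phi_coef_nz.
have dlt : (d < r * k)%N.
  have : (d <= wt w u)%N by apply: dmin; apply/hasP; exists u.
  move: hlt; rewrite /wt; lia.
have := congr1 (fun q => (phi w q)`_(d * m)) heq.
rewrite /= phi0 coef0 phiD phi_sum coefD [X in _ + X]coef_sum.
rewrite [X in _ + X]big_nat [X in _ + X]big1; last first.
  move=> i /andP [h1 h2].
  rewrite phiM phiX.
  have L1 := MonId_LB hr (powpow_sub hn (ha i _)).
  have L2 := (LB_pow (m - i) hLB).1.
  have := LB_mul (L1 _) L2; apply; first by lia.
  have : (d * m = d * i + d * (m - i))%N by rewrite -mulnDr; congr muln; lia.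
  move=> ->; rewrite ltn_add2r.
  have : (d * i < r * k * i)%N by rewrite ltn_mul2r dlt andbT; lia.
  by rewrite mulnA.
rewrite addr0 phiX (LB_pow m hLB).2 => /eqP; by rewrite expf_eq0 (negbTE nz) andbF.
Qed.

Theorem normal : normal_ideal I.
Proof.
move=> k _ f; split; first by move/closure_sub/(MonId_pow hn).
move=> hf; exists 1%N, (fun _ => - f); split => //.
  move=> i /andP [h1 h2]; have -> : i = 1%N by lia.
  apply: span_in; exists (- f), 1; split => //; last by rewrite mulr1.
  have [_ _ hM] := pow_ideal K n k; rewrite -mulN1r; exact: hM.
by rewrite big_nat1 subnn expr0 expr1 mulr1 addrN.
Qed.


Lemma gen_in_I (i : 'I_n) : I 'X_[gm i].
Proof. by apply: span_in; exists i; rewrite gen_eq. Qed.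

Lemma wt_add (w : 'I_n -> nat) m1 m2 : wt w (m1 + m2)%MM = (wt w m1 + wt w m2)%N.
Proof. by rewrite /wt -big_split; apply: eq_bigr => v _; rewrite mnmDE mulnDr. Qed.

Lemma colon_sub k f : (forall a, I a -> ideal_exp I k.+1 (f * a)) -> MonId (Pm k) f.
Proof.
move=> h u hu.
have hP : forall i, Pm k.+1 (gm i + u)%MM.
  move=> i; apply: (pow_sub hn (h _ (gen_in_I i))).
  by rewrite mcoeff_msupp mcoeffMX -mcoeff_msupp.
apply: (F_main hn) => w r hr.
pose F i := (\sum_v w v * Gb i v)%N.
have i0 : 'I_n by exists 0%N; lia.
case: (@arg_minnP _ i0 xpredT F isT) => j _ hj.
have hr' : forall i, (F j <= \sum_v w v * Gb i v)%N by move=> i; exact: hj.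
have := weight_lemma (hP j) hr'.
have -> : (\sum_v w v * (gm j + u)%MM v = wt w (gm j + u)%MM)%N by [].
rewrite wt_add.
have -> : wt w (gm j) = F j by apply: eq_bigr => v _; rewrite mnmE.
have := hr j; rewrite -/(F j) mulnS.
move=> h1 h2; have : (r * k <= F j * k)%N by rewrite leq_mul2r h1 orbT.
rewrite /wt in h2; lia.
Qed.

Theorem strong : strong_persistence I.
Proof.
move=> k _ f; split.
  by move/colon_sub/(MonId_pow hn).
move=> hf a ha; apply: span_in; exists a, f; split => //; exact: mulrC.
Qed.

Lemma ideal_span_sum (J : pset R) (S : pset R) c (s : seq (R * R)) : is_ideal J ->
  (forall p, List.In p s -> J (c * p.2)) -> J (c * \sum_(p <- s) p.1 * p.2).
Proof.
move=> [h0 hD hM]; elim: s => [|p s IH] h; first by rewrite big_nil mulr0.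
rewrite big_cons mulrDr; apply: hD; last by apply: IH => q hq; apply: h; right.
by rewrite mulrCA; apply: hM; apply: h; left.
Qed.

Theorem persist : persistence I.
Proof.
move=> k hk P [hP [r hr]].
have [Pid P1 Pprime] := hP.
pose J := ideal_exp I k.+1.
have [J0 JD JM] := pow_ideal K n k.+1.
pose Q (i : 'I_n) x := J (x * (r * 'X_[gm i])).
have PQ : forall x, P x <-> forall i, Q i x.
  move=> x; split.
    move/hr => hx i; have [_ /(_ hx) hc] := strong hk (x * r).
    by rewrite /Q mulrA; apply: hc; exact: gen_in_I.
  move=> hQ; apply/hr; have [hc _] := strong hk (x * r); apply: hc.
  move=> a [s [hs ->]]; apply: ideal_span_sum => // p /hs [i ->].
  by rewrite gen_eq -mulrA; exact: hQ.
have key : forall s : seq 'I_n, (exists2 i, i \in s & forall x, Q i x -> P x) \/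
    (exists y, (forall i, i \in s -> Q i y) /\ ~ P y).
  elim => [|i s IH]; first by right; exists 1; split.
  case: IH => [IH|[y [hy ny]]].
  - by left; case: IH => j hj hj'; exists j; rewrite // inE hj orbT.
  - case: (classic (forall x, Q i x -> P x)) => hi.
      by left; exists i; rewrite ?mem_head.
    right; case: (not_all_ex_not _ _ hi) => z hz'; case: (imply_to_and _ _ hz') => hz nz.
    exists (z * y); split.
      move=> j; rewrite inE => /orP [/eqP ->|hj].
        by rewrite /Q (mulrC z) -mulrA; apply: JM.
      by rewrite /Q -mulrA; apply: JM; apply: hy.
    by case/Pprime.
case: (key (enum 'I_n)) => [[i _ hi]|[y [hy ny]]]; last first.
  by exfalso; apply: ny; apply/PQ => i; apply: hy; rewrite mem_enum.
split => //; exists (r * 'X_[gm i]) => x; split; last exact: hi.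
by move=> hx; move: (proj1 (PQ x) hx i).
Qed.

End Main.


Theorem theorem3p2 (K : fieldType) (n : nat) (hn : (3 <= n)%N) :
  normal_ideal (NI (K:=K) (@cycle_rel n)) /\
  strong_persistence (NI (K:=K) (@cycle_rel n)) /\
  persistence (NI (K:=K) (@cycle_rel n)).
Proof.
split; first exact: normal hn.
split; first exact: strong hn.
exact: persist hn.
Qed.
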